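(* Let $s$ be the number of targeted indices, and suppose each targeted index receives at most $\ell_M$ good insertions. Then the algorithm's total RB cost for good insertions into targeted indices is $O\big(\ell_M^2\sqrt{s\,\mathcal{B}}\big)$, where $\mathcal{B}$ is the adversary's total RB cost.
   Context: Model. A hash table has $t$ indices with chaining. The objects at an index form a list, new objects are appended at the tail, and $L_i$ denotes the current number of objects in the list at index $i$. Under the algorithm \textsc{Depth Charge}, inserting an object at index $i$ costs the inserter an RB (resource-burning) cost of $L_i+1$. Objects inserted by clients are good objects and are placed at uniformly random indices. Objects inserted by the adversary are bad objects and are placed at indices of its choosing. The algorithm's RB cost is the total cost paid by clients, and $\mathcal{B}$ is the total cost paid by the adversary. $\ell_M$ is the maximum, over indices, of the maximum number of good objects ever present in that index. A targeted index is an index containing at least one bad object and at least one good object. *)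

(* Defs.v *)
From Stdlib Require Import Reals List Arith Bool.
Import ListNotations.
Open Scope bool_scope.

(* An operation on the hash table.  [Ins g i]: insertion of an object at
   index i; g = true for a good (client) object, g = false for a bad
   (adversarial) object.  [Del g i]: removal of one good (g = true) or bad
   (g = false) object from index i (a no-op if there is none).  Only the
   numbers of good / bad objects at each index matter for the costs. *)
Inductive event : Type :=
| Ins (good : bool) (i : nat)
| Del (good : bool) (i : nat).

Definition ev_index (e : event) : nat :=
  match e with Ins _ i => i | Del _ i => i end.

(* state: index |-> (number of good objects, number of bad objects) *)
Definition state := nat -> nat * nat.

Definition empty_state : state := fun _ => (0, 0).

Definition upd (st : state) (i : nat) (p : nat * nat) : state :=
  fun j => if Nat.eqb j i then p else st j.

Definition step (st : state) (e : event) : state :=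
  match e with
  | Ins true i  => upd st i (S (fst (st i)), snd (st i))
  | Ins false i => upd st i (fst (st i), S (snd (st i)))
  | Del true i  => upd st i (pred (fst (st i)), snd (st i))
  | Del false i => upd st i (fst (st i), pred (snd (st i)))
  end.

Definition state_at (es : list event) (k : nat) : state :=
  fold_left step (firstn k es) empty_state.

Definition L (st : state) (i : nat) : nat := fst (st i) + snd (st i).

(* Depth Charge: inserting at index i costs L_i + 1 *)
Definition ins_cost (st : state) (i : nat) : nat := L st i + 1.

Definition ev_cost (es : list event) (g : bool) (P : nat -> bool) (k : nat)
  : nat :=
  match nth_error es k with
  | Some (Ins g' i) =>
      if Bool.eqb g g' && P i then ins_cost (state_at es k) i else 0
  | _ => 0
  end.

Definition total_cost (es : list event) (g : bool) (P : nat -> bool) : nat :=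
  fold_right plus 0 (map (ev_cost es g P) (seq 0 (length es))).

Definition adv_cost (es : list event) : nat :=
  total_cost es false (fun _ => true).

Definition targetedb (es : list event) (i : nat) : bool :=
  existsb (fun k => Nat.ltb 0 (fst (state_at es k i))
                    && Nat.ltb 0 (snd (state_at es k i)))
          (seq 0 (S (length es))).

Definition num_targeted (t : nat) (es : list event) : nat :=
  length (filter (targetedb es) (seq 0 t)).

Definition ellM (t : nat) (es : list event) : nat :=
  fold_right Nat.max 0
    (map (fun i => fold_right Nat.max 0
            (map (fun k => fst (state_at es k i)) (seq 0 (S (length es)))))
         (seq 0 t)).

Definition good_ins (es : list event) (i : nat) : nat :=
  length (filter (fun e => match e with
                           | Ins true j => Nat.eqb j i
                           | _ => false end) es).

Definition good_cost_targeted (es : list event) : nat :=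
  total_cost es true (targetedb es).

(* Main.v *)
Require Import Defs.
From Stdlib Require Import Reals List Arith Lia Lra Psatz.
Import ListNotations.

Fixpoint sm (f : nat -> nat) (n : nat) : nat :=
  match n with 0 => 0 | S n => sm f n + f n end.

Lemma fr_plus a l : fold_right plus a l = a + fold_right plus 0 l.
Proof. induction l; simpl; lia. Qed.

Lemma fr_seq f n : fold_right plus 0 (map f (seq 0 n)) = sm f n.
Proof.
  induction n; [reflexivity|].
  rewrite seq_S, map_app, fold_right_app; simpl.
  rewrite fr_plus, IHn; lia.
Qed.

Lemma sm_ext f g n : (forall k, k < n -> f k = g k) -> sm f n = sm g n.
Proof. induction n; simpl; intros H; [reflexivity|]. rewrite IHn, H; auto. Qed.

Lemma sm_le f g n : (forall k, k < n -> f k <= g k) -> sm f n <= sm g n.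
Proof. induction n; simpl; intros H; [lia|]. specialize (IHn (fun k Hk => H k (Nat.lt_lt_succ_r _ _ Hk))). specialize (H n (Nat.lt_succ_diag_r n)). lia. Qed.

Lemma sm_plus f g n : sm (fun k => f k + g k) n = sm f n + sm g n.
Proof. induction n; simpl; lia. Qed.

Lemma sm_mult c f n : sm (fun k => c * f k) n = c * sm f n.
Proof. induction n; simpl; [lia|]. rewrite IHn; lia. Qed.

Lemma sm_zero n : sm (fun _ => 0) n = 0.
Proof. induction n; simpl; lia. Qed.

Lemma sm_mono f k n : k <= n -> sm f k <= sm f n.
Proof. induction 1; simpl; lia. Qed.

Lemma sm_swap (F : nat -> nat -> nat) n t :
  sm (fun k => sm (fun i => F i k) t) n = sm (fun i => sm (fun k => F i k) n) t.
Proof.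
  induction n; simpl.
  - symmetry; apply sm_zero.
  - rewrite IHn, <- sm_plus. reflexivity.
Qed.

Lemma sm_delta j c t : j < t -> sm (fun i => if j =? i then c else 0) t = c.
Proof.
  induction t; intros H; [lia|]. simpl.
  destruct (Nat.eqb_spec j t).
  - subst. rewrite (sm_ext _ (fun _ => 0)). rewrite sm_zero; lia.
    intros k Hk. destruct (Nat.eqb_spec t k); [lia|auto].
  - rewrite IHt; lia.
Qed.

Lemma sm_if (b : bool) f n : sm (fun k => if b then f k else 0) n = if b then sm f n else 0.
Proof. destruct b; [reflexivity|apply sm_zero]. Qed.

Lemma filter_seq_len (p : nat -> bool) t :
  length (filter p (seq 0 t)) = sm (fun i => if p i then 1 else 0) t.
Proof.
  induction t; [reflexivity|].
  rewrite seq_S, filter_app, length_app, IHt; simpl.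
  destruct (p t); simpl; lia.
Qed.

Lemma filter_len_nth {A} (p : A -> bool) (es : list A) :
  length (filter p es) =
  sm (fun k => match nth_error es k with Some e => if p e then 1 else 0 | None => 0 end) (length es).
Proof.
  induction es using rev_ind; [reflexivity|].
  rewrite filter_app, length_app, length_app, Nat.add_1_r. simpl sm.
  rewrite IHes. f_equal.
  2:{ rewrite nth_error_app2, Nat.sub_diag by lia. simpl. destruct (p x); reflexivity. }
  apply sm_ext. intros k Hk. rewrite nth_error_app1 by lia. reflexivity.
Qed.

Lemma fold_step_S es k e st :
  nth_error es k = Some e ->
  fold_left step (firstn (S k) es) st = step (fold_left step (firstn k es) st) e.
Proof.
  revert k st; induction es; intros k st H; destruct k; simpl in *; try discriminate.
  - injection H as ->. reflexivity.
  - apply IHes; auto.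
Qed.

Lemma state_at_S es k e :
  nth_error es k = Some e -> state_at es (S k) = step (state_at es k) e.
Proof. apply fold_step_S. Qed.

Lemma in_fold_max x l : In x l -> x <= fold_right Nat.max 0 l.
Proof. induction l; simpl; intros H; [contradiction|]. destruct H as [->|H]; [lia|]. specialize (IHl H); lia. Qed.

Lemma good_le_ellM t es i k : i < t -> k <= length es -> fst (state_at es k i) <= ellM t es.
Proof.
  intros Hi Hk. unfold ellM.
  eapply Nat.le_trans; [|apply in_fold_max, in_map_iff; exists i; split; [reflexivity| apply in_seq; lia]].
  apply in_fold_max, in_map_iff. exists k; split; [reflexivity|apply in_seq; lia].
Qed.

Definition Bi es i := sm (ev_cost es false (fun j => j =? i)) (length es).

Lemma state_at_0 es : state_at es 0 = empty_state.
Proof. reflexivity. Qed.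

Lemma bad_inv es i k : k <= length es ->
  snd (state_at es k i) * (snd (state_at es k i) + 1)
  <= 2 * sm (ev_cost es false (fun j => j =? i)) k.
Proof.
  induction k; intros Hk; [simpl; lia|].
  assert (Hlt : k < length es) by lia.
  destruct (nth_error es k) as [e|] eqn:He;
    [|apply nth_error_None in He; lia].
  specialize (IHk ltac:(lia)).
  rewrite (state_at_S _ _ _ He). simpl sm.
  unfold ev_cost at 2. rewrite He.
  remember (state_at es k) as st.
  unfold ins_cost, L.
  destruct e as [[|] j|[|] j]; simpl; unfold upd;
    destruct (Nat.eqb_spec i j); destruct (Nat.eqb_spec j i); simpl; try lia.
  all: try (subst j; clear Heqst; set (b := snd (st i)) in *; set (S0 := sm _ k) in *; try destruct b; simpl in *; nia).
Qed.

Lemma ev_decomp es g P t k :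
  (forall e, nth_error es k = Some e -> ev_index e < t) ->
  ev_cost es g P k = sm (fun i => if P i then ev_cost es g (fun j => j =? i) k else 0) t.
Proof.
  intros Ht. unfold ev_cost.
  destruct (nth_error es k) as [[g' j|g' j]|] eqn:He.
  - specialize (Ht _ eq_refl). simpl in Ht.
    rewrite (sm_ext _ (fun i => if j =? i then (if Bool.eqb g g' && P j then ins_cost (state_at es k) j else 0) else 0)).
    + symmetry; apply sm_delta; auto.
    + intros i _. destruct (Nat.eqb_spec j i).
      * subst. destruct (P i), (Bool.eqb g g'); reflexivity.
      * destruct (P i), (Bool.eqb g g'); simpl; auto.
        all: destruct (Nat.eqb_spec j i); congruence.
  - symmetry. rewrite (sm_ext _ (fun _ => 0)); [apply sm_zero|]. intros i _; destruct (P i); auto.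
  - symmetry. rewrite (sm_ext _ (fun _ => 0)); [apply sm_zero|]. intros i _; destruct (P i); auto.
Qed.

Lemma total_decomp es g P t :
  (forall e, In e es -> ev_index e < t) ->
  total_cost es g P = sm (fun i => if P i then total_cost es g (fun j => j =? i) else 0) t.
Proof.
  intros Ht. unfold total_cost. rewrite fr_seq.
  rewrite (sm_ext _ (fun k => sm (fun i => if P i then ev_cost es g (fun j => j =? i) k else 0) t)).
  - rewrite sm_swap. apply sm_ext. intros i _. rewrite fr_seq, <- sm_if. reflexivity.
  - intros k _. apply ev_decomp. intros e He. apply Ht. eapply nth_error_In; eauto.
Qed.

Definition pgood i (e : event) := match e with Ins true j => j =? i | _ => false end.

Lemma good_per_index t es i :
  (forall e, In e es -> ev_index e < t) ->
  total_cost es true (fun j => j =? i)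
  <= (ellM t es + 1 + Nat.sqrt (2 * Bi es i)) * good_ins es i.
Proof.
  intros Ht. unfold total_cost, good_ins. rewrite fr_seq.
  change (fun e => match e with Ins true j => j =? i | _ => false end) with (pgood i).
  rewrite filter_len_nth, <- sm_mult.
  apply sm_le. intros k Hk. unfold ev_cost.
  destruct (nth_error es k) as [e|] eqn:He; [|lia].
  destruct e as [[|] j|[|] j]; simpl; try lia.
  destruct (Nat.eqb_spec j i); simpl; [|lia]. subst j.
  assert (Hi : i < t) by (apply (Ht (Ins true i)); eapply nth_error_In; eauto).
  unfold ins_cost, L.
  pose proof (good_le_ellM t es i k Hi ltac:(lia)).
  pose proof (bad_inv es i k ltac:(lia)).
  pose proof (sm_mono (ev_cost es false (fun j => j =? i)) k (length es) ltac:(lia)).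
  fold (Bi es i) in H1.
  set (b := snd (state_at es k i)) in *.
  assert (b <= Nat.sqrt (2 * Bi es i)).
  { rewrite <- (Nat.sqrt_square b). apply Nat.sqrt_le_mono. nia. }
  replace (Bi es i + (Bi es i + 0)) with (2 * Bi es i) by lia. lia.
Qed.

Lemma targeted_B es i : targetedb es i = true -> 1 <= Bi es i /\ exists k, k <= length es /\ 0 < fst (state_at es k i).
Proof.
  unfold targetedb. intros H. apply existsb_exists in H as [k [Hk H]].
  apply in_seq in Hk. apply Bool.andb_true_iff in H as [H1 H2].
  apply Nat.ltb_lt in H1, H2.
  pose proof (bad_inv es i k ltac:(lia)).
  pose proof (sm_mono (ev_cost es false (fun j => j =? i)) k (length es) ltac:(lia)).
  unfold Bi. split; [nia|]. exists k; split; [lia|auto].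
Qed.

Lemma cs_aux f w x t : (forall i, f i = 0 \/ w i = 1) ->
  2 * x * sm f t <= x * x * sm w t + sm (fun i => f i * f i) t.
Proof.
  intros H. rewrite <- !sm_mult, <- sm_plus. apply sm_le. intros i _.
  destruct (H i) as [E | E]; rewrite E; [lia|]. set (y := f i). destruct (Nat.le_ge_cases x y) as [L|L]; [destruct (Nat.le_exists_sub _ _ L) as [d [-> _]] | destruct (Nat.le_exists_sub _ _ L) as [d [-> _]]]; nia.
Qed.

Lemma cs f w t : (forall i, f i = 0 \/ w i = 1) ->
  sm f t * sm f t <= sm w t * sm (fun i => f i * f i) t.
Proof.
  intros H. induction t; simpl; [lia|].
  pose proof (cs_aux f w (f t) t H).
  destruct (H t) as [E|E]; rewrite E in *; nia.
Qed.

Lemma sm_pos_ex (p : nat -> bool) t : 1 <= sm (fun i => if p i then 1 else 0) t -> exists i, i < t /\ p i = true.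
Proof.
  induction t; simpl; intros H; [lia|].
  destruct (p t) eqn:E; [exists t; split; auto|].
  destruct IHt as [i [? ?]]; [lia|]. exists i; split; auto.
Qed.

Theorem main_nat (t : nat) (es : list event) :
  (forall e, In e es -> ev_index e < t) ->
  (forall i, i < t -> targetedb es i = true -> good_ins es i <= ellM t es) ->
  exists X,
  good_cost_targeted es <= ellM t es * (ellM t es + 1) * num_targeted t es + ellM t es * X
  /\ X * X <= num_targeted t es * (2 * adv_cost es)
  /\ num_targeted t es <= adv_cost es.
Proof.
  intros Ht Hg.
  set (l := ellM t es).
  set (W := fun i => if targetedb es i then 1 else 0).
  set (F := fun i => if targetedb es i then Nat.sqrt (2 * Bi es i) else 0).
  assert (Hs : num_targeted t es = sm W t) by apply filter_seq_len.
  assert (HB : adv_cost es = sm (Bi es) t).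
  { unfold adv_cost. rewrite (total_decomp _ _ _ t Ht). apply sm_ext. intros i _.
    unfold Bi, total_cost. rewrite fr_seq. reflexivity. }
  exists (sm F t). rewrite Hs, HB. split; [|split].
  - unfold good_cost_targeted. rewrite (total_decomp _ _ _ t Ht).
    rewrite <- sm_mult, <- sm_mult, <- sm_plus. apply sm_le. intros i Hi.
    unfold W, F. destruct (targetedb es i) eqn:E; [|lia].
    pose proof (good_per_index t es i Ht). pose proof (Hg i Hi E). fold l in H, H0. nia.
  - apply Nat.le_trans with (sm W t * sm (fun i => F i * F i) t).
    + apply cs. intros i; unfold F, W; destruct (targetedb es i); auto.
    + apply Nat.mul_le_mono_l. rewrite <- sm_mult. apply sm_le. intros i _. unfold F.
      destruct (targetedb es i); [|lia]. apply Nat.sqrt_spec; lia.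
  - apply sm_le. intros i _. unfold W. destruct (targetedb es i) eqn:E; [|lia].
    apply (targeted_B es i E).
Qed.

Lemma ell_pos t es : (forall e, In e es -> ev_index e < t) ->
  1 <= num_targeted t es -> 1 <= ellM t es.
Proof.
  intros Ht H. unfold num_targeted in H. rewrite filter_seq_len in H.
  apply sm_pos_ex in H as [i [Hi E]].
  destruct (targeted_B es i E) as [_ [k [Hk Hpos]]].
  pose proof (good_le_ellM t es i k Hi Hk). lia.
Qed.
Open Scope R_scope.

Theorem lemma3 :
  exists C : R, 0 < C /\
    forall (t : nat) (es : list event),
      (forall e, In e es -> (ev_index e < t)%nat) ->
      (forall i, (i < t)%nat -> targetedb es i = true ->
                 (good_ins es i <= ellM t es)%nat) ->
      INR (good_cost_targeted es)
        <= C * (INR (ellM t es))^2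
             * sqrt (INR (num_targeted t es) * INR (adv_cost es)).
Proof.
  exists 4. split; [lra|]. intros t es Ht Hg.
  destruct (main_nat t es Ht Hg) as [X [H1 [H2 H3]]].
  set (G := good_cost_targeted es) in *. set (l := ellM t es) in *.
  set (s := num_targeted t es) in *. set (B := adv_cost es) in *.
  apply le_INR in H1, H2, H3.
  rewrite !plus_INR, !mult_INR in H1. rewrite !mult_INR in H2.
  simpl in H1, H2.
  assert (Hs0 : 0 <= INR s) by apply pos_INR.
  assert (HB0 : 0 <= INR B) by apply pos_INR.
  assert (HX0 : 0 <= INR X) by apply pos_INR.
  assert (HG0 : 0 <= INR G) by apply pos_INR.
  assert (Hl0 : 0 <= INR l) by apply pos_INR.
  set (r := sqrt (INR s * INR B)).
  assert (Hr0 : 0 <= r) by apply sqrt_pos.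
  assert (Hr2 : r * r = INR s * INR B) by (apply sqrt_sqrt; nra).
  assert (Hsr : INR s <= r) by nra.
  assert (HXr : INR X <= 2 * r) by nra.
  rewrite plus_INR in H1. simpl in H1.
  destruct (Nat.eq_dec l 0) as [E|E].
  - assert (El : INR l = 0) by (rewrite E; reflexivity). rewrite El in H1 |- *.
    assert (INR G <= 0) by lra. lra.
  - assert (E' : 1 <= INR l) by (apply (le_INR 1); lia).
    assert (INR l * (INR l + 1) * INR s <= INR l * (INR l + 1) * r)
      by (apply Rmult_le_compat_l; nra).
    assert (INR l * INR X <= INR l * (2 * r)) by (apply Rmult_le_compat_l; nra).
    assert ((INR l + 3) * r <= 4 * INR l * r) by (apply Rmult_le_compat_r; nra).
    nra.
Qed.
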